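(* Let $f:\mathbb{R}^d\to\mathbb{R}$ be convex and differentiable with $L$-Lipschitz gradient, with $X^*\neq\emptyset$, and suppose $f(x)-f^*\ge\mu\,\mathrm{dist}(x,X^* )^p$ for all $x$, for some $\mu>0$ and $p\ge2$. Run the Proximal Bundle Method with $\beta\in(0,1)$ and constant stepsize $\rho_k=\rho>0$. Write $\Delta_0=f(x_0)-f^*$. Then for any $0<\epsilon\le\Delta_0$, the number of descent steps taken before an $\epsilon$-minimizer is found is at most $$N:=\begin{cases}\dfrac{2\rho}{(1-2/p)\beta\mu^{2/p}\epsilon^{1-2/p}}+\left\lceil\dfrac{2\log\left(\Delta_0/(\rho/\mu^{2/p})^{1/(1-2/p)}\right)}{\beta}\right\rceil_+ & p>2,\\[2mm] \left\lceil\dfrac{2\log(\Delta_0/\epsilon)}{\beta\min\{\mu/\rho,1\}}\right\rceil & p=2,\end{cases}$$ and the number of null steps taken before then is at most $\dfrac{16(L+\rho)^3}{(1-\beta)^2\rho^3}(N+1)$ if $p>2$ and $\dfrac{16(L+\rho)^3}{(1-\beta)^2\rho^3}N$ if $p=2$.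
   Context: Throughout, $f:\mathbb{R}^d\to\mathbb{R}$ is a proper closed convex function attaining its minimum $f^*=\inf f$ on the nonempty set $X^*=\{x: f(x)=f^*\}$; $\mathrm{dist}(x,S)=\inf_{y\in S}\|x-y\|$; $\partial f(x)$ is the convex subdifferential; $\lceil a\rceil_+=\max\{\lceil a\rceil,0\}$. A subgradient oracle returns, for any $x$, the value $f(x)$ and some $g(x)\in\partial f(x)$. Proximal Bundle Method: fix $\beta\in(0,1)$, $x_0=z_0\in\mathbb{R}^d$, $g_0=g(x_0)$, and the initial model $f_0(x)=f(x_0)+\langle g_0,x-x_0\rangle$. At iteration $k\ge0$, given a convex model $f_k:\mathbb{R}^d\to\mathbb{R}$ and stepsize $\rho_k>0$, compute $z_{k+1}=\operatorname{argmin}_z f_k(z)+\frac{\rho_k}{2}\|z-x_k\|^2$. If $\beta(f(x_k)-f_k(z_{k+1}))\le f(x_k)-f(z_{k+1})$, iteration $k$ is a descent step and $x_{k+1}=z_{k+1}$; otherwise it is a null step and $x_{k+1}=x_k$. Then a new convex model $f_{k+1}$ and stepsize $\rho_{k+1}$ are chosen satisfying, with $g_{k+1}=g(z_{k+1})$ and $s_{k+1}=\rho_k(x_k-z_{k+1})$: (1) $f_{k+1}(x)\le f(x)$ for all $x$; (2) $f_{k+1}(x)\ge f(z_{k+1})+\langle g_{k+1},x-z_{k+1}\rangle$ for all $x$; (3) if iteration $k$ was a null step, $f_{k+1}(x)\ge f_k(z_{k+1})+\langle s_{k+1},x-z_{k+1}\rangle$ for all $x$; (4) if iteration $k$ was a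 null step, $\rho_{k+1}\ge\rho_k$. An $\epsilon$-minimizer is a point $x$ with $f(x)-f^*\le\epsilon$. *)

(* Defs.v *)
From HB Require Import structures.
From mathcomp Require Import all_boot all_order all_algebra.
From mathcomp Require Import all_classical all_reals exp.
Set Implicit Arguments. Unset Strict Implicit. Unset Printing Implicit Defensive.
Import Order.TTheory GRing.Theory Num.Theory.
Local Open Scope ring_scope.
Local Open Scope classical_set_scope.

Section Defs.
Variables (R : realType) (d : nat).
Notation vec := 'rV[R]_d.

Definition dot (u v : vec) : R := \sum_(i < d) u ord0 i * v ord0 i.
Definition enorm (u : vec) : R := Num.sqrt (dot u u).

Definition dist (x : vec) (S : set vec) : R := inf [set enorm (x - y) | y in S].

Definition convex_fun (f : vec -> R) : Prop :=
  forall (x y : vec) (t : R), 0 <= t <= 1 ->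
    f (t *: x + (1 - t) *: y) <= t * f x + (1 - t) * f y.

Definition is_subgradient (f : vec -> R) (x g : vec) : Prop :=
  forall y, f x + dot g (y - x) <= f y.

Definition has_gradient (f : vec -> R) (gradf : vec -> vec) : Prop :=
  forall x (eps : R), 0 < eps -> exists2 delta : R, 0 < delta &
    forall h, enorm h < delta ->
      `| f (x + h) - f x - dot (gradf x) h | <= eps * enorm h.

Definition smooth_with (f : vec -> R) (L : R) : Prop :=
  exists gradf : vec -> vec, has_gradient f gradf /\
    forall x y, enorm (gradf x - gradf y) <= L * enorm (x - y).

Definition is_min_value (f : vec -> R) (fstar : R) : Prop :=
  (forall x, fstar <= f x) /\ exists x, f x = fstar.

Definition descent_step (beta : R) (f : vec -> R) (fk : vec -> R)
    (xk zk1 : vec) : bool :=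
  beta * (f xk - fk zk1) <= f xk - f zk1.

Definition PBM_run (f : vec -> R) (g : vec -> vec) (beta rho : R)
    (x z : nat -> vec) (fmod : nat -> vec -> R) : Prop :=
  [/\ z 0%N = x 0%N /\
      fmod 0%N = (fun y => f (x 0%N) + dot (g (x 0%N)) (y - x 0%N)),
      (forall k, convex_fun (fmod k)),
      (forall k y, fmod k (z k.+1) + rho / 2 * enorm (z k.+1 - x k) ^+ 2
                   <= fmod k y + rho / 2 * enorm (y - x k) ^+ 2),
      (forall k, x k.+1 = if descent_step beta f (fmod k) (x k) (z k.+1)
                          then z k.+1 else x k) &
      (forall k,
        [/\ (forall y, fmod k.+1 y <= f y),
            (forall y, f (z k.+1) + dot (g (z k.+1)) (y - z k.+1) <= fmod k.+1 y) &
            (~~ descent_step beta f (fmod k) (x k) (z k.+1) ->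
               forall y, fmod k (z k.+1) + dot (rho *: (x k - z k.+1)) (y - z k.+1)
                         <= fmod k.+1 y)])].

Definition n_descent (beta : R) (f : vec -> R) (x z : nat -> vec)
    (fmod : nat -> vec -> R) (K : nat) : nat :=
  count (fun k => descent_step beta f (fmod k) (x k) (z k.+1)) (iota 0 K).
Definition n_null (beta : R) (f : vec -> R) (x z : nat -> vec)
    (fmod : nat -> vec -> R) (K : nat) : nat :=
  count (fun k => ~~ descent_step beta f (fmod k) (x k) (z k.+1)) (iota 0 K).

End Defs.

Definition ceil_plus (R : realType) (a : R) : R := (Num.max (Num.ceil a) 0%R)%:~R.

Definition N_bound (R : realType) (p mu rho beta eps Delta0 : R) : R :=
  if 2 < p then
    2 * rho / ((1 - 2 / p) * beta * powR mu (2 / p) * powR eps (1 - 2 / p))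
    + ceil_plus (2 * ln (Delta0 / powR (rho / powR mu (2 / p)) (1 / (1 - 2 / p))) / beta)
  else
    (Num.ceil (2 * ln (Delta0 / eps) / (beta * Num.min (mu / rho) 1)))%:~R.

Definition null_bound (R : realType) (p L mu rho beta eps Delta0 : R) : R :=
  16 * (L + rho) ^+ 3 / ((1 - beta) ^+ 2 * rho ^+ 3) *
  (if 2 < p then N_bound p mu rho beta eps Delta0 + 1
   else N_bound p mu rho beta eps Delta0).

(* Main.v *)
Require Import Defs.
From HB Require Import structures.
From mathcomp Require Import all_boot all_order all_algebra.
From mathcomp Require Import all_classical all_reals exp sequences.
From mathcomp Require Import ring lra.
Import Order.TTheory GRing.Theory Num.Theory.
Local Open Scope ring_scope.
Local Open Scope classical_set_scope.
Set Implicit Arguments. Unset Strict Implicit.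

Section Vec.
Variables (R : realType) (d : nat).
Implicit Types (u v w : 'rV[R]_d).

Lemma dotC u v : dot u v = dot v u.
Proof. by apply: eq_bigr => i _; rewrite mulrC. Qed.

Lemma dotDl u v w : dot (u + v) w = dot u w + dot v w.
Proof. by rewrite /dot -big_split; apply: eq_bigr => i _; rewrite mxE mulrDl. Qed.

Lemma dotZl (a : R) u v : dot (a *: u) v = a * dot u v.
Proof. by rewrite /dot mulr_sumr; apply: eq_bigr => i _; rewrite mxE mulrA. Qed.

Lemma dotNl u v : dot (- u) v = - dot u v.
Proof. by rewrite -scaleN1r dotZl mulN1r. Qed.

Lemma dotBl u v w : dot (u - v) w = dot u w - dot v w.
Proof. by rewrite dotDl dotNl. Qed.

Lemma dotDr u v w : dot w (u + v) = dot w u + dot w v.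
Proof. by rewrite dotC dotDl !(dotC w). Qed.

Lemma dotZr (a : R) u v : dot u (a *: v) = a * dot u v.
Proof. by rewrite dotC dotZl dotC. Qed.

Lemma dotNr u v : dot u (- v) = - dot u v.
Proof. by rewrite dotC dotNl dotC. Qed.

Lemma dotBr u v w : dot w (u - v) = dot w u - dot w v.
Proof. by rewrite dotDr dotNr. Qed.

Lemma dot0l v : dot 0 v = 0.
Proof. by rewrite -(scale0r 0) dotZl mul0r. Qed.

Lemma dot0r v : dot v 0 = 0.
Proof. by rewrite dotC dot0l. Qed.

Lemma dot_ge0 u : 0 <= dot u u.
Proof. by apply: sumr_ge0 => i _; rewrite -expr2 sqr_ge0. Qed.

Lemma dot_eq0 u : dot u u = 0 -> u = 0.
Proof.
move=> h; apply/rowP => i; rewrite mxE.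

have hp : forall i : 'I_d, xpredT i -> 0 <= u ord0 i * u ord0 i.
  by move=> k _; rewrite -expr2 sqr_ge0.
have H := @psumr_eq0P R _ xpredT (fun i => u ord0 i * u ord0 i) hp h i (erefl true).
by apply/eqP; rewrite -sqrf_eq0 expr2 H.
Qed.

Lemma enorm_ge0 u : 0 <= enorm u.
Proof. exact: sqrtr_ge0. Qed.

Lemma enorm_sq u : enorm u ^+ 2 = dot u u.
Proof. by rewrite /enorm sqr_sqrtr // dot_ge0. Qed.

Lemma enormZ (a : R) u : enorm (a *: u) = `|a| * enorm u.
Proof.
rewrite /enorm dotZl dotZr mulrA -expr2 sqrtrM ?sqr_ge0 //.
by rewrite sqrtr_sqr.
Qed.

Lemma enormN u : enorm (- u) = enorm u.
Proof. by rewrite -scaleN1r enormZ normrN normr1 mul1r. Qed.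

Lemma enormB u v : enorm (u - v) = enorm (v - u).
Proof. by rewrite -enormN opprB. Qed.

Lemma enorm_eq0 u : enorm u = 0 -> u = 0.
Proof. by move=> h; apply: dot_eq0; rewrite -enorm_sq h expr2 mul0r. Qed.

Lemma sqnormD u v : enorm (u + v) ^+ 2 = enorm u ^+ 2 + 2 * dot u v + enorm v ^+ 2.
Proof. rewrite !enorm_sq dotDl !dotDr (dotC v u); ring. Qed.

Lemma sqnormB u v : enorm (u - v) ^+ 2 = enorm u ^+ 2 - 2 * dot u v + enorm v ^+ 2.
Proof. rewrite sqnormD enormN dotNr; ring. Qed.

Lemma CS u v : dot u v <= enorm u * enorm v.
Proof.
have [a0|] := eqVneq (enorm u) 0.
  by rewrite (enorm_eq0 a0) dot0l mulr_ge0 ?enorm_ge0.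
have [b0|] := eqVneq (enorm v) 0.
  by rewrite (enorm_eq0 b0) dot0r mulr_ge0 ?enorm_ge0.
move=> bn0 an0.
have ha : 0 < enorm u by rewrite lt_neqAle eq_sym an0 enorm_ge0.
have hb : 0 < enorm v by rewrite lt_neqAle eq_sym bn0 enorm_ge0.
have := enorm_ge0 (enorm v *: u - enorm u *: v).
move=> _.
have h := sqr_ge0 (enorm (enorm v *: u - enorm u *: v)).
rewrite sqnormB !enormZ dotZl dotZr !ger0_norm ?enorm_ge0 // in h.
have hab : 0 < enorm u * enorm v by apply: mulr_gt0.
nra.
Qed.

Lemma CSabs u v : - (enorm u * enorm v) <= dot u v.
Proof. by rewrite lerNl -dotNl -(enormN u) CS. Qed.

End Vec.


Section Grad.
Variables (R : realType) (d : nat) (f : 'rV[R]_d -> R) (g : 'rV[R]_d -> 'rV[R]_d).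
Hypothesis hsub : forall y, is_subgradient f y (g y).

Lemma sub_at (y w : 'rV[R]_d) : f y + dot (g y) (w - y) <= f w.
Proof. exact: hsub. Qed.

Lemma grad_eq (gradf : 'rV[R]_d -> 'rV[R]_d) :
  has_gradient f gradf -> forall y, g y = gradf y.
Proof.
move=> hg y; apply/eqP; rewrite -subr_eq0; apply/eqP.
set v := g y - gradf y.
have [//|hv] := eqVneq v 0; exfalso.
have nv : 0 < enorm v.
  rewrite lt_neqAle enorm_ge0 andbT; apply/eqP => /esym/enorm_eq0; exact/eqP.
have [del del0 H] := hg y (enorm v / 2) ltac:(by rewrite divr_gt0).
set t := del / (2 * enorm v).
have t0 : 0 < t by rewrite divr_gt0 // mulr_gt0.
have eh : enorm (t *: v) = del / 2.
  rewrite enormZ ger0_norm ?ltW // /t; field; lra.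
have := H (t *: v); rewrite eh => /(_ ltac:(lra)).
have hs := hsub y (y + t *: v).
have ee : y + t *: v - y = t *: v by rewrite addrC addKr.
rewrite ee in hs.
have : dot v (t *: v) = t * enorm v ^+ 2 by rewrite dotZr enorm_sq.
rewrite /v dotBl => e1 habs.
have := ler_norm (f (y + t *: v) - f y - dot (gradf y) (t *: v)).
move=> hn.
have : t * enorm v ^+ 2 <= enorm v / 2 * (del / 2) by lra.
rewrite /t => hh.
have : del / (2 * enorm v) * enorm v ^+ 2 = del * enorm v / 2.
  field; lra.
move=> e2; rewrite e2 in hh.
nra.
Qed.

Lemma Lge0 L (c : 'rV[R]_d) : smooth_with f L -> g c != 0 -> 0 <= L.
Proof.
move=> [gf [hg hL]] gc.
have E := @grad_eq gf hg.
have := hL (c + g c) c.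
have ee : c + g c - c = g c by rewrite addrC addKr.
rewrite ee -!E.
have : 0 < enorm (g c).
  rewrite lt_neqAle enorm_ge0 andbT; apply/eqP => /esym/enorm_eq0 h.
  by rewrite h eqxx in gc.
have := enorm_ge0 (g (c + g c) - g c).
move=> h1 h2 h3; nra.
Qed.

Lemma descent_weak L : smooth_with f L ->
  forall y w, f y <= f w + dot (g w) (y - w) + L * enorm (y - w) ^+ 2.
Proof.
move=> [gf [hg hL]] y w.
have E := @grad_eq gf hg.
have hs := hsub y w.
have h1 : dot (g y) (w - y) = - dot (g y) (y - w) by rewrite -dotNr opprB.
have h2 : dot (g y) (y - w) = dot (g w) (y - w) + dot (g y - g w) (y - w).
  by rewrite dotBl; ring.
have h3 := CS (g y - g w) (y - w).
have h4 := hL y w; rewrite -!E in h4.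
have h5 := enorm_ge0 (y - w).
have h6 : enorm (g y - g w) * enorm (y - w) <= L * enorm (y - w) * enorm (y - w).
  by apply: ler_wpM2r.
rewrite expr2; nra.
Qed.

Lemma g0_min (c : 'rV[R]_d) : g c = 0 -> forall y, f c <= f y.
Proof. by move=> h y; have := hsub c y; rewrite h dot0l addr0. Qed.

End Grad.


Lemma null_real (R : realFieldType) (M L rho beta e G r D hk : R) :
  0 < rho -> 0 <= L -> M = 2 * L + rho -> 0 < beta -> beta < 1 ->
  0 <= G -> 0 <= r -> G ^+ 2 <= 2 * M * e ->
  rho / 2 * r ^+ 2 <= D -> e - G * r <= D ->
  (1 - beta) * hk <= e -> 0 <= hk ->
  rho * (1 - beta) / (8 * M) * hk <= D.
Proof.
move=> r0 L0 eM b0 b1 G0 rr0 hG hA hB he hk0.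
have M0 : 0 < M by lra.
have e0 : 0 <= e by nra.
set m := rho * e / (8 * M).
have hm : 8 * M * m = rho * e by rewrite /m; field; lra.
have m1 : rho * (1 - beta) / (8 * M) * hk <= m.
  have k0 : 0 <= rho / (8 * M) by apply: divr_ge0; lra.
  have -> : rho * (1 - beta) / (8 * M) * hk = rho / (8 * M) * ((1 - beta) * hk) by ring.
  have -> : m = rho / (8 * M) * e by rewrite /m; ring.
  exact: ler_wpM2l.
apply: (le_trans m1).
have [c1|c1] := lerP m (rho / 2 * r ^+ 2); first lra.
have h4 : 4 * M * r ^+ 2 < e.
  have : rho * (4 * M * r ^+ 2) < rho * e by nra.
  by rewrite ltr_pM2l.
have h5 : (G * r) ^+ 2 <= 2 * M * e * r ^+ 2 by rewrite exprMn; nra.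
have h6 : (G * r) ^+ 2 * 2 <= e ^+ 2 by nra.
have h7 : G * r <= 7 / 8 * e.
  have h8 : 0 <= G * r by nra.
  rewrite leNgt; apply/negP => h9.
  have h10 : (7 / 8 * e) * (7 / 8 * e) < (G * r) * (G * r).
    nra.
  move: h6; rewrite expr2 => h6; nra.
have : m <= e / 8.
  have h12 : rho * e <= M * e by apply: ler_wpM2r =>//; lra.
  have h11 : (8 * M) * m <= (8 * M) * (e / 8).
    rewrite hm; have -> : 8 * M * (e / 8) = M * e by field.
    done.
  by rewrite ler_pM2l in h11; lra.
lra.
Qed.

Section PBM.
Variables (R : realType) (d : nat) (f : 'rV[R]_d -> R) (L fstar : R)
    (g : 'rV[R]_d -> 'rV[R]_d) (beta rho : R)
    (x z : nat -> 'rV[R]_d) (fmod : nat -> 'rV[R]_d -> R).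
Hypotheses (hconv : convex_fun f) (hsm : smooth_with f L)
  (hsub : forall y, is_subgradient f y (g y))
  (hb0 : 0 < beta) (hb1 : beta < 1) (hr : 0 < rho) (hL : 0 <= L)
  (hrun : PBM_run f g beta rho x z fmod).

Definition desc k := descent_step beta f (fmod k) (x k) (z k.+1).
Definition vv k := fmod k (z k.+1) + rho / 2 * enorm (z k.+1 - x k) ^+ 2.
Definition hh k := f (x k) - vv k.
Definition MM := 2 * L + rho.

Lemma MM_gt0 : 0 < MM.
Proof. rewrite /MM. move: hL hr => a b. lra. Qed.

Lemma run_x k : x k.+1 = if desc k then z k.+1 else x k.
Proof. by case: hrun => _ _ _ H _; exact: H. Qed.

Lemma model_le k y : fmod k y <= f y.
Proof.
case: hrun => [[hz0 hf0]] _ _ _ H.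
case: k => [|k]; last by case: (H k).
by rewrite hf0; apply: hsub.
Qed.

Lemma argmin k y : vv k <= fmod k y + rho / 2 * enorm (y - x k) ^+ 2.
Proof. by case: hrun => _ _ H _ _; exact: H. Qed.

Lemma cut_next k y : f (z k.+1) + dot (g (z k.+1)) (y - z k.+1) <= fmod k.+1 y.
Proof. by case: hrun => _ _ _ _ H; case: (H k). Qed.

Lemma agg k y : ~~ desc k ->
  fmod k (z k.+1) + dot (rho *: (x k - z k.+1)) (y - z k.+1) <= fmod k.+1 y.
Proof. by case: hrun => _ _ _ _ H; case: (H k) => _ _ h /h. Qed.

Definition cut_at k := forall y, f (x k) + dot (g (x k)) (y - x k) <= fmod k y.

Lemma cut_at0 : cut_at 0.
Proof. by case: hrun => [[hz0 hf0]] _ _ _ _ y; rewrite hf0. Qed.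

Lemma cut_atS k : desc k -> cut_at k.+1.
Proof. by move=> hd y; rewrite run_x hd; apply: cut_next. Qed.

Lemma vv_le k y : vv k <= f y + rho / 2 * enorm (y - x k) ^+ 2.
Proof. by apply: (le_trans (argmin k y)); rewrite lerD2r model_le. Qed.

Lemma hh_star k : enorm (g (x k)) ^+ 2 / (2 * MM) <= hh k.
Proof.
set c := x k; set y := c + (- MM^-1) *: g c.
have e : y - c = (- MM^-1) *: g c by rewrite /y addrC addKr.
have h1 := descent_weak hsub hsm y c.
have h2 := vv_le k y.
rewrite e dotZr enormZ normrN in h1.
rewrite e enormZ normrN in h2.
rewrite -enorm_sq in h1.
have M0 := MM_gt0.
have Mi : 0 <= MM^-1 by rewrite invr_ge0 ltW.
rewrite (ger0_norm Mi) in h1 h2.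
rewrite /hh -/c.
set G := enorm (g c) in h1 h2 *.
have hm : MM^-1 * MM = 1 by rewrite mulVf // gt_eqF.
clear e; clearbody y c G.
have : G ^+ 2 / (2 * MM) = G ^+ 2 * MM^-1 - (L + rho / 2) * (MM^-1 * G) ^+ 2.
  rewrite /MM in hm M0 *; field; lra.
move=> ->.
rewrite /MM in h1 h2 hm M0 Mi *.
move: hL hr => a b.
nra.
Qed.

Lemma hh_fresh k : cut_at k -> hh k <= enorm (g (x k)) ^+ 2 / (2 * rho).
Proof.
move=> hc; rewrite /hh /vv.
set c := x k; set u := z k.+1 - x k.
have h1 := hc (z k.+1); rewrite -/c -/u in h1.
have h2 := sqr_ge0 (enorm (g c + rho *: u)).
rewrite sqnormD enormZ dotZr (ger0_norm (ltW hr)) in h2.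
have : enorm (g c) ^+ 2 / (2 * rho) =
  (enorm (g c) ^+ 2 + 2 * (rho * dot (g c) u) + (rho * enorm u) ^+ 2) / (2 * rho)
   - dot (g c) u - rho / 2 * enorm u ^+ 2.
  move: hr => a; field; lra.
move=> ->.
have h3 : 0 <= (enorm (g c) ^+ 2 + 2 * (rho * dot (g c) u) + (rho * enorm u) ^+ 2) / (2 * rho).
  by apply: divr_ge0 => //; move: hr => a; lra.
lra.
Qed.


Lemma vec_id1 (t : R) (w c : 'rV[R]_d) : t *: w + (1 - t) *: c - c = t *: (w - c).
Proof. by apply/rowP => i; rewrite !mxE; ring. Qed.

Lemma vec_id2 (a : R) (w c : 'rV[R]_d) : (c + a *: w) - c = a *: w.
Proof. by apply/rowP => i; rewrite !mxE; ring. Qed.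

Lemma hh_ge0 k : 0 <= hh k.
Proof.
apply: le_trans (hh_star k); apply: divr_ge0; first exact: sqr_ge0.
by have := MM_gt0; move=> a; lra.
Qed.

Lemma null_dec k : ~~ desc k ->
  hh k.+1 <= (1 - rho * (1 - beta) / (8 * MM)) * hh k.
Proof.
move=> hn0.
have xk1 : x k.+1 = x k by rewrite run_x (negbTE hn0).
have hk0 := hh_ge0 k.
have hn := hn0; move: hn; rewrite /desc /descent_step -ltNge => hn.
have hA := agg (z k.+2) hn0.
have hB := cut_next k (z k.+2).
have M0 := MM_gt0.
rewrite /hh /vv xk1 in hk0 *.
set c := x k in hn hk0 hA hB *; set z1 := z k.+1 in hn hk0 hA hB *.
set fk := fmod k in hn hk0 hA *.
set u := z1 - c.
set e := f z1 - fk z1.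
set w := rho *: (c - z1) - g z1.
set G := enorm w.
have hG : G ^+ 2 <= 2 * MM * e.
  set a := MM^-1.
  have a0 : 0 < a by rewrite invr_gt0.
  have aM : a * MM = 1 by rewrite mulVf // gt_eqF.
  set y := z1 + a *: w.
  have ey : y - z1 = a *: w by rewrite /y vec_id2.
  have h1 := agg y hn0.
  have h2 := model_le k.+1 y.
  have h3 := descent_weak hsub hsm y z1.
  rewrite -/c -/z1 -/fk ey dotZr in h1.
  rewrite ey dotZr enormZ (ger0_norm (ltW a0)) -/G in h3.
  have hd : dot (rho *: (c - z1)) w = dot (g z1) w + G ^+ 2.
    by rewrite /G enorm_sq {2}/w dotBl /w; ring.
  rewrite hd in h1.
  have h4 : a * G ^+ 2 <= e + L * (a * G) ^+ 2 by rewrite /e; lra.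
  clearbody a y G e; clear ey h1 h2 h3 hd.
  move: hL hr => q1 q2.
  have h5 : MM * G ^+ 2 <= MM ^+ 2 * e + L * G ^+ 2.
    have := ler_wpM2l (ltW (mulr_gt0 M0 M0)) h4.
    have -> : MM * MM * (a * G ^+ 2) = (a * MM) * MM * G ^+ 2 by ring.
    have -> : MM * MM * (e + L * (a * G) ^+ 2) = MM ^+ 2 * e + L * (a * MM) ^+ 2 * G ^+ 2 by ring.
    by rewrite aM; lra.
  rewrite /MM in h5 M0 *.
  nra.
have hq : z k.+2 - c = (z k.+2 - z1) + u by rewrite /u; apply/rowP => i; rewrite !mxE; ring.
set q := z k.+2 - z1 in hA hB hq.
have hsq := sqnormD q u.
rewrite -hq in hsq.
have hs1 : dot (rho *: (c - z1)) q = - rho * dot u q.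
  by rewrite dotZl -(opprB z1 c) dotNl; ring.
have hs2 : dot (g z1) q = - dot w q - rho * dot u q.
  by rewrite /w dotBl hs1; ring.
have hcs := CS w q.
rewrite hs1 in hA; rewrite hs2 in hB.
have hduq : dot q u = dot u q by rewrite dotC.
have hen : (1 - beta) * (f c - (fk z1 + rho / 2 * enorm u ^+ 2)) <= e.
  have hu : 0 <= (1 - beta) * (rho / 2 * enorm u ^+ 2).
    apply: mulr_ge0; first by move: hb1 => b1; lra.
    by apply: mulr_ge0; [move: hr => r0; lra| apply: sqr_ge0].
  move: hb0 hb1 hn hu => b0 b1 hn' hu'; rewrite /e.
  clearbody c z1 fk u e w G q.
  nra.
have := @null_real R MM L rho beta e G (enorm q)
   (fmod k.+1 (z k.+2) + rho / 2 * enorm (z k.+2 - c) ^+ 2 - (fk z1 + rho / 2 * enorm u ^+ 2))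
   (f c - (fk z1 + rho / 2 * enorm u ^+ 2)) hr hL erefl hb0 hb1 (enorm_ge0 _) (enorm_ge0 _) hG.
rewrite -/G.
move=> H.
rewrite hsq in H *.
rewrite hduq in H *.
have hcs' : dot w q <= G * enorm q by [].
have ee : e = f z1 - fk z1 by [].
have hk0' : 0 <= f c - (fk z1 + rho / 2 * enorm u ^+ 2) by [].
clearbody c z1 fk u e w G q.
move: hr => r0.
set V := (fmod k.+1 (z k.+2) +
  rho / 2 * (enorm q ^+ 2 + 2 * dot u q + enorm u ^+ 2) -
  (fk z1 + rho / 2 * enorm u ^+ 2)) in H *.
have p1 : rho / 2 * enorm q ^+ 2 <= V by rewrite /V; lra.
have hq0 : 0 <= rho / 2 * enorm q ^+ 2 by apply: mulr_ge0; [lra|apply: sqr_ge0].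
have p2 : e - G * enorm q <= V by rewrite /V; lra.
have H2 := H p1 p2 hen hk0'.
rewrite /V in H2.
lra.
Qed.


Lemma desc_dec k : desc k -> f (x k.+1) - fstar <= f (x k) - fstar - beta * hh k.
Proof.
move=> hd.
have hx : x k.+1 = z k.+1 by rewrite run_x hd.
move: hd; rewrite /desc /descent_step hx /hh /vv => hd.
have h1 : 0 <= rho / 2 * enorm (z k.+1 - x k) ^+ 2.
  by apply: mulr_ge0; [move: hr => ?; lra| apply: sqr_ge0].
have h2 : beta * (f (x k) - (fmod k (z k.+1) + rho / 2 * enorm (z k.+1 - x k) ^+ 2))
   <= beta * (f (x k) - fmod k (z k.+1)).
  by apply: ler_wpM2l; [exact: ltW| lra].
lra.
Qed.

Lemma f_mono k : f (x k.+1) <= f (x k).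
Proof.
case hd : (desc k).
  have := desc_dec hd; have := hh_ge0 k.
  have : 0 <= beta * hh k by apply: mulr_ge0; [exact: ltW| exact: hh_ge0].
  lra.
by rewrite run_x hd.
Qed.

Hypothesis hmin : is_min_value f fstar.

Definition Xs := [set w | f w = fstar].

Lemma dist_ge0 (c : 'rV[R]_d) : 0 <= dist c Xs.
Proof.
case: hmin => _ [w hw].
apply: lb_le_inf; first by exists (enorm (c - w)); exists w.
by move=> _ [y _ <-]; apply: enorm_ge0.
Qed.

Lemma dist_approx (c : 'rV[R]_d) (eta : R) : 0 < eta ->
  exists w, f w = fstar /\ enorm (w - c) < dist c Xs + eta.
Proof.
move=> e0.
case: hmin => _ [w0 hw0].
have ne : [set enorm (c - y) | y in Xs] !=set0 by exists (enorm (c - w0)); exists w0.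
have : inf [set enorm (c - y) | y in Xs] < dist c Xs + eta by rewrite /dist; lra.
case/(inf_lt ne) => _ [w hw <-] h.
by exists w; split => //; rewrite enormB.
Qed.

Lemma hh_dist_eta k t (w : 'rV[R]_d) : 0 <= t <= 1 -> f w = fstar ->
  t * (f (x k) - fstar) - rho / 2 * t ^+ 2 * enorm (w - x k) ^+ 2 <= hh k.
Proof.
move=> /andP [t0 t1] hw.
set c := x k.
set y := t *: w + (1 - t) *: c.
have hy : y - c = t *: (w - c) by rewrite vec_id1.
have h1 := hconv w c (t := t) ltac:(by rewrite t0 t1).
have h2 := vv_le k y.
rewrite -/c -/y hy enormZ (ger0_norm t0) in h2.
rewrite -/y hw in h1.
rewrite /hh -/c.
have E : rho / 2 * (t * enorm (w - c)) ^+ 2 = rho / 2 * t ^+ 2 * enorm (w - c) ^+ 2.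
  by rewrite exprMn mulrA.
rewrite E in h2.
lra.
Qed.

Lemma hh_dist k t : 0 <= t <= 1 ->
  t * (f (x k) - fstar) - rho / 2 * t ^+ 2 * dist (x k) Xs ^+ 2 <= hh k.
Proof.
move=> ht.
set D := dist (x k) Xs.
have D0 : 0 <= D := dist_ge0 (x k).
have /andP [t0 t1] := ht.
have r0 := hr.
rewrite leNgt; apply/negP => hlt.
set gap := t * (f (x k) - fstar) - rho / 2 * t ^+ 2 * D ^+ 2 - hh k.
have gp : 0 < gap by rewrite /gap; lra.
set eta := Num.min 1 (gap / (rho * (2 * D + 1))).
have q0 : 0 < rho * (2 * D + 1) by apply: mulr_gt0; lra.
have e0 : 0 < eta by rewrite /eta lt_min ltr01 divr_gt0.
have e1 : eta <= 1 by rewrite /eta ge_min lexx.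
have e2 : eta * (rho * (2 * D + 1)) <= gap.
  have : eta <= gap / (rho * (2 * D + 1)) by rewrite /eta ge_min lexx orbT.
  by rewrite ler_pdivlMr.
have [w [hw hwc]] := dist_approx (x k) e0.
have H := hh_dist_eta k ht hw.
have n0 := enorm_ge0 (w - x k).
have hsq : enorm (w - x k) ^+ 2 <= (D + eta) ^+ 2.
  rewrite -/D in hwc; nra.
have tt : t ^+ 2 <= 1 by rewrite expr_le1.
have hm : rho / 2 * t ^+ 2 * enorm (w - x k) ^+ 2 <= rho / 2 * t ^+ 2 * (D + eta) ^+ 2.
  by apply: ler_wpM2l => //; apply: mulr_ge0; [lra| apply: sqr_ge0].
have hm2 : rho / 2 * t ^+ 2 * ((D + eta) ^+ 2 - D ^+ 2) <= rho / 2 * (eta * (2 * D + 1)).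
  have hx : (D + eta) ^+ 2 - D ^+ 2 <= eta * (2 * D + 1) by nra.
  have hy : 0 <= (D + eta) ^+ 2 - D ^+ 2 by nra.
  have : t ^+ 2 * ((D + eta) ^+ 2 - D ^+ 2) <= eta * (2 * D + 1) by nra.
  move=> hz; rewrite -mulrA; apply: ler_wpM2l => //; lra.
rewrite /gap in gp e2.
clearbody D eta gap.
nra.
Qed.

Lemma count_S (P : pred nat) k : count P (iota 0 k.+1) = (count P (iota 0 k) + P k)%N.
Proof. by rewrite -addn1 iotaD count_cat /= add0n addn0. Qed.

Fixpoint tr k := if k is k'.+1 then (if desc k' then 0 else (tr k').+1)%N else 0%N.

Definition Dl k := n_descent beta f x z fmod k.
Definition Ul k := n_null beta f x z fmod k.

Lemma Dl_S k : Dl k.+1 = (Dl k + desc k)%N.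
Proof. exact: count_S. Qed.

Lemma Ul_S k : Ul k.+1 = (Ul k + ~~ desc k)%N.
Proof. exact: (count_S (fun k => ~~ desc k)). Qed.

Lemma DUl k : (Dl k + Ul k)%N = k.
Proof. by rewrite /Dl /Ul /n_descent /n_null count_predC size_iota. Qed.

Definition rr := rho * (1 - beta) / (8 * MM).
Definition CC := 16 * (L + rho) ^+ 3 / ((1 - beta) ^+ 2 * rho ^+ 3).

Lemma rr_gt0 : 0 < rr.
Proof.
rewrite /rr; apply: divr_gt0; last by have := MM_gt0; move=> ?; lra.
by apply: mulr_gt0 => //; move: hb1 => ?; lra.
Qed.

Lemma rr_le1 : rr <= 1.
Proof.
rewrite /rr ler_pdivrMr; last by have := MM_gt0; move=> ?; lra.
move: hb0 hb1 hr hL; rewrite /MM => ? ? ? ?; nra.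
Qed.

Lemma tr_real (t G : R) : 0 < G -> 0 <= t ->
  G / (2 * MM) * (1 + t * rr) <= G / (2 * rho) -> t <= CC.
Proof.
move=> G0 t0 H.
have M0 := MM_gt0.
have r0 := hr; have b0 := hb0; have b1 := hb1; have l0 := hL.
have rp := rr_gt0.
have h1 : 1 + t * rr <= MM / rho.
  have e : G / (2 * rho) = G / (2 * MM) * (MM / rho) by field; apply/andP; split; rewrite gt_eqF.
  rewrite e in H.
  by rewrite -(ler_pM2l (_ : 0 < G / (2 * MM))) //; apply: divr_gt0 => //; lra.
have h2 : t * rr <= 2 * L / rho.
  have : MM / rho = 1 + 2 * L / rho by rewrite /MM; field; rewrite gt_eqF.
  lra.
have h3 : t <= 2 * L / rho / rr by rewrite ler_pdivlMr.
apply: le_trans h3 _.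
rewrite /rr /CC /MM.
have b2 : 0 < 1 - beta by lra.
set K := 2 * L / rho / (rho * (1 - beta) / (8 * (2 * L + rho))).
have -> : K = 16 * L * (2 * L + rho) / (rho ^+ 2 * (1 - beta)).
  rewrite /K; field; do ?[apply/andP; split]; rewrite ?gt_eqF //; lra.
rewrite ler_pdivlMr; last by apply: mulr_gt0; apply: exprn_gt0.
have -> : 16 * L * (2 * L + rho) / (rho ^+ 2 * (1 - beta)) * ((1 - beta) ^+ 2 * rho ^+ 3)
  = 16 * (L * (2 * L + rho) * rho * (1 - beta)).
  by field; apply/andP; split; rewrite gt_eqF.
rewrite ler_pM2l; last lra.
have h4 : L * (2 * L + rho) * rho * (1 - beta) <= L * (2 * L + rho) * rho.
  have X0 : 0 <= L * (2 * L + rho) * rho.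
    by apply: mulr_ge0; [apply: mulr_ge0 => //; lra| lra].
  nra.
apply: le_trans h4 _.
have -> : (L + rho) ^+ 3 = (L + rho) * (L + rho) * (L + rho) by ring.
have q1 : 0 <= L * L * L by apply: mulr_ge0 => //; apply: mulr_ge0.
have q2 : 0 <= L * rho * rho by apply: mulr_ge0 => //; [apply: mulr_ge0 => //; lra| lra].
have q3 : 0 <= rho * rho * rho by apply: mulr_ge0; [apply: mulr_ge0|]; lra.
have q4 : 0 <= L * L * rho by apply: mulr_ge0 => //; [apply: mulr_ge0| lra].
nra.
Qed.

Variables (mu p eps : R) (Phi : R -> R) (NB : R).
Hypotheses (hmu : 0 < mu)
  (hgrow : forall y, mu * powR (dist y Xs) p <= f y - fstar)
  (he : 0 < eps)
  (Pstep : forall a a' D h, eps < a' -> 0 <= D -> mu * powR D p <= a ->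
     a' <= a - beta * h ->
     (forall t, 0 <= t <= 1 -> t * a - rho / 2 * t ^+ 2 * D ^+ 2 <= h) ->
     Phi a' <= Phi a - 1)
  (Ppos : forall a, eps < a -> Phi eps < Phi a).

Definition Dl0 := f (x 0) - fstar.

Lemma g_nz k : eps < f (x k) - fstar -> 0 < enorm (g (x k)) ^+ 2.
Proof.
move=> hk.
have e0 := he.
rewrite lt_neqAle sqr_ge0 andbT eq_sym sqrf_eq0; apply/negP => /eqP /enorm_eq0 h.
case: hmin => hm [w hw].
have := g0_min hsub h w; lra.
Qed.

Lemma inv k : (forall j, (j <= k)%N -> eps < f (x j) - fstar) ->
  [/\ hh k * (1 + (tr k)%:R * rr) <= enorm (g (x k)) ^+ 2 / (2 * rho),
      Phi (f (x k) - fstar) <= Phi Dl0 - (Dl k)%:R &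
      (Ul k)%:R <= CC * (Dl k)%:R + (tr k)%:R].
Proof.
elim: k => [|k IH] hj.
  split; rewrite /= ?mul0r ?addr0 ?mulr1.
  - exact: hh_fresh cut_at0.
  - by rewrite /Dl /n_descent /= subr0.
  - by rewrite /Ul /n_null /= mulr0.
have [I1 I2 I3] := IH (fun j hj' => hj j (leqW hj')).
have hk : eps < f (x k) - fstar by apply: hj; apply: leqnSn.
have hk1 : eps < f (x k.+1) - fstar by apply: hj.
have trC : (tr k)%:R <= CC.
  apply: (tr_real (g_nz hk)); first exact: ler0n.
  apply: le_trans I1; apply: ler_wpM2r; last exact: hh_star.
  by have := rr_gt0 => ?; have := ler0n R (tr k); nra.
rewrite Dl_S Ul_S /=.
case hd : (desc k) => /=.
- rewrite mul0r addr0 mulr1 addn0 addn1.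
  split.
  + exact: hh_fresh (cut_atS hd).
  + have := Pstep hk1 (dist_ge0 (x k)) (hgrow (x k)) (desc_dec hd) (fun t ht => hh_dist k ht).
    rewrite -natr1; lra.
  + rewrite -natr1; have := ler0n R (Dl k).
    have cc0 : 0 <= CC by apply: le_trans trC; exact: ler0n.
    nra.
- rewrite addn0 addn1.
  have xk : x k.+1 = x k by rewrite run_x hd.
  split.
  + rewrite xk.
    have hn := null_dec (negbT hd).
    have h0 := hh_ge0 k.
    have rp := rr_gt0; have r1 := rr_le1.
    have t0 := ler0n R (tr k).
    rewrite -/rr in hn.
    apply: le_trans I1.
    rewrite -natr1.
    have q0 : 0 <= 1 + ((tr k)%:R + 1) * rr by nra.
    have := ler_wpM2r q0 hn.
    move=> h1; apply: le_trans h1 _.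
    have e : (1 - rr) * hh k * (1 + ((tr k)%:R + 1) * rr) =
      hh k * ((1 - rr) * (1 + ((tr k)%:R + 1) * rr)) by ring.
    rewrite e; apply: ler_wpM2l => //.
    have : 0 <= rr * rr * ((tr k)%:R + 1) by apply: mulr_ge0; [apply: mulr_ge0; lra| lra].
    lra.
  + by rewrite xk.
  + rewrite -!natr1; lra.
Qed.

Lemma Dl_bound k : (forall j, (j <= k)%N -> eps < f (x j) - fstar) ->
  (Dl k)%:R < Phi Dl0 - Phi eps.
Proof.
move=> hj; have [_ I2 _] := inv hj.
have := Ppos (hj k (leqnn k)); lra.
Qed.

Lemma trC_lem k : (forall j, (j <= k)%N -> eps < f (x j) - fstar) -> (tr k)%:R <= CC.
Proof.
move=> hj; have [I1 _ _] := inv hj.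
have hk : eps < f (x k) - fstar by apply: hj.
apply: (tr_real (g_nz hk)); first exact: ler0n.
apply: le_trans I1; apply: ler_wpM2r; last exact: hh_star.
by have := rr_gt0 => ?; have := ler0n R (tr k); nra.
Qed.

Lemma CC_ge0 : 0 <= CC.
Proof.
rewrite /CC; apply: divr_ge0; first by apply: mulr_ge0 => //; apply: exprn_ge0; move: hL hr => ? ?; lra.
by apply: mulr_ge0; apply: exprn_ge0; move: hb1 hr => ? ?; lra.
Qed.

Lemma exists_eps : exists k, f (x k) - fstar <= eps.
Proof.
case: (pselect (exists k, f (x k) - fstar <= eps)) => // Hn; exfalso.
have hj : forall j, eps < f (x j) - fstar.
  by move=> j; rewrite ltNge; apply/negP => h; apply: Hn; exists j.
set B := (1 + CC) * (Phi Dl0 - Phi eps) + CC.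
set n := Num.Def.archi_bound `|B|.
have hn : B < n%:R by apply: le_lt_trans (ler_norm B) (archi_boundP _).
have [_ _ I3] := @inv n (fun j _ => hj j).
have D1 := @Dl_bound n (fun j _ => hj j).
have T1 := @trC_lem n (fun j _ => hj j).
have E := DUl n.
have c0 := CC_ge0.
have : (n%:R : R) = (Dl n)%:R + (Ul n)%:R by rewrite -natrD E.
have d0 := ler0n R (Dl n).
have : (1 + CC) * (Dl n)%:R <= (1 + CC) * (Phi Dl0 - Phi eps).
  by apply: ler_wpM2l; lra.
rewrite /B in hn.
nra.
Qed.


Hypotheses (heD : eps <= Dl0)
  (Pfin : forall n : nat, (n%:R : R) < Phi Dl0 - Phi eps + 1 -> (n%:R : R) <= NB).

Lemma main_generic : exists K,
  [/\ f (x K) - fstar <= eps, (Dl K)%:R <= NB & (Ul K)%:R <= CC * NB].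
Proof.
have exP : exists k, (f (x k) - fstar <= eps) := exists_eps.
case: (ex_minnP exP) => K hK hmn.
exists K.
have c0 := CC_ge0.
have e0 := he.
have NB0 : 0 <= NB.
  apply: (Pfin (n := 0%N)); rewrite /=.
  have [h|h] := eqVneq eps Dl0; first by rewrite h subrr add0r ltr01.
  have := Ppos (_ : eps < Dl0); rewrite lt_neqAle h heD => /(_ isT); lra.
case: K hK hmn => [|k] hK hmn.
  split => //.
  by rewrite /Ul /n_null /=; exact: mulr_ge0.
have hj : forall j, (j <= k)%N -> eps < f (x j) - fstar.
  move=> j hjk; rewrite ltNge; apply/negP => h.
  by have := hmn j h; rewrite leqNgt ltnS hjk.
have hd : desc k.
  apply/negPn/negP => hd; move: hK; rewrite run_x (negbTE hd).
  have := hj k (leqnn k); lra.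
have [_ _ I3] := inv hj.
have T1 := trC_lem hj.
have D1 := Dl_bound hj.
rewrite Dl_S Ul_S hd addn0 addn1.
split => //.
  by apply: Pfin; rewrite -natr1; lra.
have H : (Dl k).+1%:R <= NB by apply: Pfin; rewrite -natr1; lra.
apply: le_trans I3 _.
apply: le_trans (ler_wpM2l c0 H).
rewrite -natr1 mulrDr mulr1; lra.
Qed.

End PBM.


Section Reals.
Variable R : realType.
Implicit Types a b : R.

Lemma ln_le a b : 0 < a -> a <= b -> ln a <= ln b.
Proof. by move=> a0 ab; rewrite ler_ln ?posrE //; apply: lt_le_trans ab. Qed.

Lemma ln_lt a b : 0 < a -> a < b -> ln a < ln b.
Proof. by move=> a0 ab; rewrite ltr_ln ?posrE //; apply: lt_trans ab. Qed.

Lemma lnMp a b : 0 < a -> 0 < b -> ln (a * b) = ln a + ln b.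
Proof. by move=> a0 b0; rewrite lnM ?posrE. Qed.

Lemma lnK' a : 0 < a -> expR (ln a) = a.
Proof. by move=> a0; rewrite lnK ?posrE. Qed.

Lemma expR_ge1D a : 1 + a <= expR a.
Proof. exact: expR_ge1Dx. Qed.

Lemma ln_1m a : 0 <= a < 1 -> ln (1 - a) <= - a.
Proof. by move=> /andP [a0 a1]; have := @le_ln1Dx R (- a); rewrite addrC; apply; lra. Qed.

Lemma powR_exp a r : 0 < a -> powR a r = expR (r * ln a).
Proof. by move=> a0; rewrite /powR gt_eqF. Qed.

Lemma minr_l a b : a <= b -> Num.min a b = a.
Proof. by rewrite minEle => ->. Qed.

Lemma minr_r a b : b <= a -> Num.min a b = b.
Proof. by case: (lerP a b) => // h1 h2; apply/eqP; rewrite eq_le h1 h2. Qed.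

End Reals.

Section Pgt2.
Variables (R : realType) (mu rho beta p eps : R).
Hypotheses (hmu : 0 < mu) (hr : 0 < rho) (hb0 : 0 < beta) (hb1 : beta < 1)
  (hp : 2 < p) (he : 0 < eps).

Definition al := 1 - 2 / p.
Definition lT := (ln rho - 2 / p * ln mu) / al.
Definition TT := expR lT.
Definition XX a := expR (al * (ln a - lT)).
Definition iP a := expR (- al * ln a).
Definition AA := al * beta * iP TT / 2.
Definition Psi a := if a <= TT then (iP eps - iP a) / AA
  else (iP eps - iP TT) / AA + 2 / beta * (ln a - lT) + 1.

Lemma al_gt0 : 0 < al.
Proof.
rewrite /al subr_gt0 ltr_pdivrMr; last by move: hp => ?; lra.
by move: hp => ?; lra.
Qed.

Lemma al_lt1 : al < 1.
Proof.
rewrite /al; have : 0 < 2 / p by apply: divr_gt0 => //; move: hp => ?; lra.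
lra.
Qed.

Lemma lnTT : ln TT = lT.
Proof. by rewrite /TT expRK. Qed.

Lemma TT_gt0 : 0 < TT.
Proof. exact: expR_gt0. Qed.

Lemma AA_gt0 : 0 < AA.
Proof.
rewrite /AA; apply: divr_gt0 => //; apply: mulr_gt0; last exact: expR_gt0.
by apply: mulr_gt0 => //; exact: al_gt0.
Qed.

Lemma iP_TT_AA : iP TT / AA = 2 / (al * beta).
Proof.
rewrite /AA; have := expR_gt0 (- al * ln TT); rewrite -/(iP TT) => h.
have := al_gt0 => a0.
by field; rewrite !gt_eqF.
Qed.

Lemma two_le : 2 <= 2 / (al * beta).
Proof.
have a0 := al_gt0; have a1 := al_lt1.
have ab : 0 < al * beta by apply: mulr_gt0.
have ab1 : al * beta <= 1 by move: hb0 hb1 => ? ?; nra.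
rewrite ler_pdivlMr //; nra.
Qed.

Lemma iP_lt a b : 0 < a -> a < b -> iP b < iP a.
Proof.
move=> a0 ab; rewrite /iP ltr_expR.
have := ln_lt a0 ab; have := al_gt0; nra.
Qed.

Lemma iP_le a b : 0 < a -> a <= b -> iP b <= iP a.
Proof.
move=> a0 ab; rewrite /iP ler_expR.
have := ln_le a0 ab; have := al_gt0; nra.
Qed.

Lemma XX_ge1 a : 0 < a -> TT <= a -> 1 <= XX a.
Proof.
move=> a0 Ta; rewrite /XX -expR0 ler_expR.
have := ln_le TT_gt0 Ta; rewrite lnTT; have := al_gt0; nra.
Qed.

Lemma XX_le1 a : 0 < a -> a <= TT -> XX a <= 1.
Proof.
move=> a0 Ta; rewrite /XX -(expR0 R) ler_expR.
have := ln_le a0 Ta; rewrite lnTT; have := al_gt0; nra.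
Qed.

Lemma XX_gt0 a : 0 < XX a.
Proof. exact: expR_gt0. Qed.

Lemma growth_D (D a : R) : 0 < a -> 0 <= D -> mu * powR D p <= a ->
  rho * D ^+ 2 * XX a <= a.
Proof.
move=> a0 D0 hg.
have [->|Dn0] := eqVneq D 0.
  by rewrite expr0n /= mulr0 mul0r ltW.
have Dp : 0 < D by rewrite lt_neqAle eq_sym Dn0.
rewrite powR_exp // in hg.
have h1 : ln mu + p * ln D <= ln a.
  rewrite -(expRK (p * ln D)) -lnMp //; last exact: expR_gt0.
  apply: ln_le => //; apply: mulr_gt0 => //; exact: expR_gt0.
have p0 : 0 < p by move: hp => ?; lra.
have eD : D ^+ 2 = expR (2 * ln D) by rewrite -(lnK' Dp) expRK expr2 -expRD; congr expR; ring.
rewrite -(lnK' a0) -(lnK' hr) eD /XX -!expRD ler_expR.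
rewrite expRK.
have hal : al * lT = ln rho - 2 / p * ln mu.
  by rewrite /lT mulrC divfK // gt_eqF // al_gt0.
have : 2 * ln D <= 2 / p * (ln a - ln mu).
  have h1' : p * ln D <= ln a - ln mu by lra.
  have q0 : 0 <= 2 / p by apply: divr_ge0; lra.
  have := ler_wpM2l q0 h1'.
  have -> : 2 / p * (p * ln D) = 2 * ln D by field; rewrite gt_eqF.
  done.
rewrite /al in hal *.
move=> h2.
have -> : ln rho + 2 * ln D + (1 - 2 / p) * (ln a - lT) =
  2 * ln D + (1 - 2 / p) * ln a + (ln rho - (1 - 2 / p) * lT) by ring.
rewrite hal.
lra.
Qed.

Lemma desc_fact (D a a' h : R) : 0 < a -> 0 <= D -> mu * powR D p <= a ->
  a' <= a - beta * h ->
  (forall t, 0 <= t <= 1 -> t * a - rho / 2 * t ^+ 2 * D ^+ 2 <= h) ->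
  a' <= a - beta * (a / 2 * Num.min 1 (XX a)).
Proof.
move=> a0 D0 hg ha ht.
have hG := growth_D a0 D0 hg.
have X0 := XX_gt0 a.
suff : a / 2 * Num.min 1 (XX a) <= h.
  move=> H; have : beta * (a / 2 * Num.min 1 (XX a)) <= beta * h.
    by apply: ler_wpM2l => //; exact: ltW.
  lra.
have [X1|X1] := lerP 1 (XX a).
- 
  have := ht 1 ltac:(by rewrite ler01 lexx).
  have : rho * D ^+ 2 <= a.
    apply: le_trans hG; rewrite -{1}(mulr1 (rho * D ^+ 2)); apply: ler_wpM2l => //.
    by apply: mulr_ge0; [exact: ltW| exact: sqr_ge0].
  rewrite expr1n; lra.
- 
  have := ht (XX a) ltac:(by rewrite (ltW X0) (ltW X1)).
  have : rho * XX a ^+ 2 * D ^+ 2 <= XX a * a.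
    have := ler_wpM2l (ltW X0) hG.
    by rewrite !expr2 => h2; apply: le_trans h2 => //; rewrite le_eqVlt; apply/orP; left; apply/eqP; ring.
  move=> h3 h4.
  have -> : a / 2 * XX a = XX a * a - XX a * a / 2 by field.
  have : rho / 2 * XX a ^+ 2 * D ^+ 2 = (rho * XX a ^+ 2 * D ^+ 2) / 2 by field.
  lra.
Qed.

Lemma psi_aux (u v w A : R) : 0 < A -> w + A <= v -> (u - v) / A <= (u - w) / A - 1.
Proof.
move=> A0 h.
have -> : (u - w) / A - 1 = (u - v) / A + (v - w - A) / A by field; rewrite gt_eqF.
rewrite lerDl; apply: divr_ge0; lra.
Qed.

Lemma iP_mul a b : 0 < a -> 0 < b -> iP (a * b) = iP a * iP b.
Proof. by move=> a0 b0; rewrite /iP lnMp // mulrDr expRD. Qed.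

Lemma iP_X a : 0 < a -> iP a * XX a = iP TT.
Proof.
by move=> a0; rewrite /iP /XX -expRD lnTT; congr expR; ring.
Qed.

Lemma psi_drop a a' : eps < a' -> 0 < a ->
  a' <= a - beta * (a / 2 * Num.min 1 (XX a)) -> Psi a' <= Psi a - 1.
Proof.
move=> ea' a0 ha.
have b0 := hb0; have b1 := hb1; have r0 := hr; have e0 := he.
have a'0 : 0 < a' by apply: lt_trans ea'.
have X0 := XX_gt0 a.
have A0 := AA_gt0.
have al0 := al_gt0.
rewrite /Psi.
have [aT|aT] := lerP a TT.
- have X1 := XX_le1 a0 aT.
  rewrite (minr_r X1) in ha.
  set y := beta * XX a / 2.
  have y0 : 0 <= y by rewrite /y; apply: divr_ge0 => //; apply: mulr_ge0; apply: ltW.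
  have y1 : y < 1.
    rewrite /y; have : beta * XX a <= 1 by move: hb0 hb1 => ? ?; nra.
    lra.
  have ha2 : a' <= a * (1 - y) by rewrite /y; lra.
  have a'T : a' <= a.
    have : a * (1 - y) <= a by rewrite ler_piMr //; lra.
    lra.
  rewrite (le_trans a'T aT).
  apply: psi_aux => //.
  have h1 := iP_le a'0 ha2.
  rewrite iP_mul // in h1; last lra.
  have h2 : 1 + al * y <= iP (1 - y).
    rewrite /iP; apply: le_trans (expR_ge1D _).
    have := @ln_1m R y ltac:(by rewrite y0 y1).
    nra.
  have h3 : iP a * (al * y) = AA.
    by rewrite /AA /y -(iP_X a0); field.
  have iPa0 : 0 < iP a by apply: expR_gt0.
  have : iP a * (1 + al * y) <= iP a * iP (1 - y) by apply: ler_wpM2l => //; exact: ltW.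
  rewrite mulrDr mulr1 h3; lra.
- have X1 := XX_ge1 a0 (ltW aT).
  rewrite (minr_l X1) mulr1 in ha.
  rewrite /=.
  have lnaT : lT < ln a by rewrite -lnTT; apply: ln_lt => //; exact: TT_gt0.
  have [a'T|a'T] := lerP a' TT.
  + have h1 : (iP eps - iP a') / AA <= (iP eps - iP TT) / AA.
      rewrite ler_pM2r ?invr_gt0 //; have := iP_le a'0 a'T; lra.
    have : 0 <= 2 / beta * (ln a - lT) by apply: mulr_ge0; [apply: divr_ge0; [lra| exact: ltW]| lra].
    lra.
  + have h1 : ln a' <= ln a - beta / 2.
      have : ln a' <= ln (a * (1 - beta / 2)) by apply: ln_le => //; lra.
      rewrite lnMp //; last lra.
      have := @ln_1m R (beta / 2) ltac:(apply/andP; split; lra).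
      lra.
    have : 2 / beta * (ln a' - lT) <= 2 / beta * (ln a - lT) - 1.
      have -> : 2 / beta * (ln a - lT) - 1 = 2 / beta * (ln a - beta / 2 - lT).
        by field; rewrite gt_eqF.
      by apply: ler_wpM2l; [apply: divr_ge0 => //; lra| lra].
    lra.
Qed.

Lemma psi_pos a : eps < a -> Psi eps < Psi a.
Proof.
move=> ea.
have b0 := hb0; have b1 := hb1; have e0 := he.
have a0 : 0 < a by lra.
have A0 := AA_gt0.
have T0 := TT_gt0.
rewrite /Psi.
have [eT|eT] := lerP eps TT.
- rewrite subrr mul0r.
  have [aT|aT] := lerP a TT.
  + by apply: divr_gt0 => //; rewrite subr_gt0; apply: iP_lt.
  + have h1 : 0 <= (iP eps - iP TT) / AA.
      by apply: divr_ge0; [rewrite subr_ge0; apply: iP_le| exact: ltW].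
    have lnaT : lT < ln a by rewrite -lnTT; apply: ln_lt.
    have : 0 <= 2 / beta * (ln a - lT) by apply: mulr_ge0; [apply: divr_ge0; lra| lra].
    lra.
- have aT : TT < a by lra.
  rewrite leNgt aT /=.
  have : ln eps < ln a by apply: ln_lt.
  have hb : 0 < 2 / beta by apply: divr_gt0; lra.
  nra.
Qed.

Lemma psi_final a : eps <= a ->
  Psi a - Psi eps + 1 <= iP eps / AA + Num.max 0 (2 / beta * (ln a - lT)).
Proof.
move=> ea.
have b0 := hb0; have b1 := hb1; have e0 := he.
have a0 : 0 < a by lra.
have A0 := AA_gt0.
have T0 := TT_gt0.
have tl := two_le.
have iT := iP_TT_AA.
have mx0 : 0 <= Num.max 0 (2 / beta * (ln a - lT)) by rewrite le_max lexx.
have mx1 : 2 / beta * (ln a - lT) <= Num.max 0 (2 / beta * (ln a - lT)) by rewrite le_max lexx orbT.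
rewrite /Psi.
have [eT|eT] := lerP eps TT.
- rewrite subrr mul0r subr0.
  have [aT|aT] := lerP a TT.
  + have : iP TT <= iP a by apply: iP_le.
    move=> h.
    have : (iP eps - iP a) / AA <= iP eps / AA - iP TT / AA.
      rewrite -mulrBl ler_pM2r ?invr_gt0 //; lra.
    lra.
  + have : (iP eps - iP TT) / AA = iP eps / AA - iP TT / AA by rewrite mulrBl.
    lra.
- have aT : TT < a by lra.
  rewrite (leNgt a TT) aT /=.
  set u := ln eps - lT.
  have hx : iP eps = iP TT * expR (- al * u).
    by rewrite /iP -expRD lnTT /u; congr expR; ring.
  have h1 : 1 - al * u <= expR (- al * u).
    by have := expR_ge1D (- al * u); rewrite mulNr.
  have h2 : iP eps / AA = 2 / (al * beta) * expR (- al * u).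
    by rewrite hx mulrAC iT.
  have al0 := al_gt0.
  have h3 : 2 / (al * beta) * (1 - al * u) = 2 / (al * beta) - 2 / beta * u.
    by field; apply/andP; split; rewrite gt_eqF.
  have h4 : 2 / (al * beta) * (1 - al * u) <= 2 / (al * beta) * expR (- al * u).
    apply: ler_wpM2l => //; apply: divr_ge0; [lra| apply: ltW; exact: mulr_gt0].
  have h5 : 2 / beta * (ln a - lT) = 2 / beta * (ln a - ln eps) + 2 / beta * u.
    by rewrite /u; ring.
  have h6 : (iP eps - iP TT) / AA + 2 / beta * (ln a - lT) + 1 -
     ((iP eps - iP TT) / AA + 2 / beta * (ln eps - lT) + 1) = 2 / beta * (ln a - ln eps).
    by ring.
  lra.
Qed.

End Pgt2.

Section Ceil.
Variable R : realType.

Lemma ceil_plus_ge (y : R) : Num.max 0 y <= ceil_plus y.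
Proof.
rewrite /ceil_plus ge_max; apply/andP; split.
  by rewrite ler0z le_max lexx orbT.
have := ceil_itv y => /andP [_ h].
apply: le_trans h _; rewrite ler_int le_max lexx //.
Qed.

Lemma nat_le_ceil (n : nat) (y : R) : (n%:R : R) < y + 1 -> (n%:R : R) <= ((Num.ceil y)%:~R : R).
Proof.
move=> h.
have : (n%:Z <= Num.ceil y)%R.
  rewrite leNgt; apply/negP => hc.
  have hc' : (Num.ceil y <= n%:Z - 1)%R.
    by rewrite -ltzD1 subrK.
  move: hc'; rewrite ceil_le_int => hy.
  move: hy; rewrite intrD -natz intrN => hy.
  lra.
by rewrite -(ler_int R).
Qed.

End Ceil.

Lemma N_gt2_bound (R : realType) (mu rho beta p eps a : R) (n : nat) :
  0 < mu -> 0 < rho -> 0 < beta -> beta < 1 -> 2 < p -> 0 < eps -> eps <= a ->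
  (n%:R : R) < Psi mu rho beta p eps a - Psi mu rho beta p eps eps + 1 ->
  (n%:R : R) <= N_bound p mu rho beta eps a.
Proof.
move=> m0 r0 b0 b1 p2 e0 ea hn.
have a0 : 0 < a by lra.
have H := psi_final mu rho b0 b1 p2 e0 ea.
rewrite /N_bound p2.
have al0 := al_gt0 p2.
have p0 : 0 < p by lra.
have eT : powR (rho / powR mu (2 / p)) (1 / (1 - 2 / p)) = TT mu rho p.
  rewrite powR_exp; last by apply: divr_gt0 => //; apply: powR_gt0.
  rewrite /TT /lT; congr expR.
  rewrite powR_exp // ln_div ?posrE //; last by apply: expR_gt0.
  by rewrite expRK -/(al p); field; rewrite !gt_eqF.
have eF : 2 * rho / ((1 - 2 / p) * beta * powR mu (2 / p) * powR eps (1 - 2 / p))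
   = iP p eps / AA mu rho beta p.
  rewrite /AA /iP /TT expRK /lT -/(al p) !powR_exp //.
  have -> : - al p * ((ln rho - 2 / p * ln mu) / al p) = - ln rho + 2 / p * ln mu.
    by field; rewrite !gt_eqF.
  rewrite expRD expRN lnK' // mulNr expRN -/(al p).
  have h1 := expR_gt0 (2 / p * ln mu); have h2 := expR_gt0 (al p * ln eps).
  by field; rewrite !gt_eqF.
rewrite eT eF.
have eL : 2 * ln (a / TT mu rho p) / beta = 2 / beta * (ln a - lT mu rho p).
  rewrite ln_div ?posrE //; last exact: TT_gt0 mu rho p.
  by rewrite lnTT; field; rewrite gt_eqF.
rewrite eL.
have := ceil_plus_ge (2 / beta * (ln a - lT mu rho p)).
lra.
Qed.

Lemma step_gt2 (R : realType) (mu rho beta p eps D a a' h : R) :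
  0 < mu -> 0 < rho -> 0 < beta -> beta < 1 -> 2 < p -> 0 < eps ->
  eps < a' -> 0 <= D -> mu * powR D p <= a -> a' <= a - beta * h ->
  (forall t, 0 <= t <= 1 -> t * a - rho / 2 * t ^+ 2 * D ^+ 2 <= h) ->
  Psi mu rho beta p eps a' <= Psi mu rho beta p eps a - 1.
Proof.
move=> m0 r0 b0 b1 p2 e0 ea' D0 hg ha ht.
have h0 : 0 <= h.
  have := ht 0; rewrite lexx ler01 /= => /(_ isT).
  by rewrite !mul0r expr0n /= mulr0 mul0r subr0.
have a0 : 0 < a.
  have : 0 <= beta * h by apply: mulr_ge0; lra.
  lra.
have := desc_fact m0 r0 b0 p2 a0 D0 hg ha ht.
by apply: psi_drop.
Qed.

Section P2.
Variables (R : realType) (mu rho beta eps : R).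
Hypotheses (hmu : 0 < mu) (hr : 0 < rho) (hb0 : 0 < beta) (hb1 : beta < 1)
  (he : 0 < eps).

Definition mm := Num.min (mu / rho) 1.
Definition Psi2 (a : R) := 2 / (beta * mm) * ln a.

Lemma mm_gt0 : 0 < mm.
Proof. by rewrite /mm lt_min ltr01 andbT divr_gt0. Qed.

Lemma mm_le1 : mm <= 1.
Proof. by rewrite /mm ge_min lexx orbT. Qed.

Lemma mm_le : mm * rho <= mu.
Proof.
have : mm <= mu / rho by rewrite /mm ge_min lexx.
by rewrite ler_pdivlMr.
Qed.

Lemma step_2 (D a a' h : R) : eps < a' -> 0 <= D -> mu * powR D 2 <= a ->
  a' <= a - beta * h ->
  (forall t, 0 <= t <= 1 -> t * a - rho / 2 * t ^+ 2 * D ^+ 2 <= h) ->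
  Psi2 a' <= Psi2 a - 1.
Proof.
move=> ea' D0 hg ha ht.
have b0 := hb0; have b1 := hb1; have r0 := hr; have e0 := he; have m0 := hmu.
have mg := mm_gt0; have ml := mm_le1; have mr := mm_le.
rewrite (@powR_mulrn R D 2) // in hg.
have h0 : 0 <= h.
  have := ht 0; rewrite lexx ler01 /= => /(_ isT).
  by rewrite !mul0r expr0n /= mulr0 mul0r subr0.
have a0 : 0 < a.
  have : 0 <= beta * h by apply: mulr_ge0; lra.
  lra.
have a'0 : 0 < a' by lra.
have hm := ht mm ltac:(by rewrite (ltW mg) ml).
have h1 : rho * mm * D ^+ 2 <= a.
  have : mm * rho * D ^+ 2 <= mu * D ^+ 2 by apply: ler_wpM2r => //; exact: sqr_ge0.
  have -> : rho * mm * D ^+ 2 = mm * rho * D ^+ 2 by ring.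
  lra.
have h2 : mm * a / 2 <= h.
  have : rho / 2 * mm ^+ 2 * D ^+ 2 <= mm * a / 2.
    have := ler_wpM2l (ltW mg) h1.
    move=> h3; rewrite expr2.
    have -> : rho / 2 * (mm * mm) * D ^+ 2 = mm * (rho * mm * D ^+ 2) / 2 by field.
    lra.
  lra.
have h3 : a' <= a * (1 - beta * mm / 2).
  have : beta * (mm * a / 2) <= beta * h by apply: ler_wpM2l; lra.
  have -> : a * (1 - beta * mm / 2) = a - beta * (mm * a / 2) by field.
  lra.
have bm : 0 < beta * mm by apply: mulr_gt0.
have bm1 : beta * mm < 1 by nra.
have h4 : ln a' <= ln a - beta * mm / 2.
  have := ln_le a'0 h3; rewrite lnMp //; last lra.
  have := @ln_1m R (beta * mm / 2) ltac:(apply/andP; split; lra).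
  lra.
rewrite /Psi2.
have -> : 2 / (beta * mm) * ln a - 1 = 2 / (beta * mm) * (ln a - beta * mm / 2).
  by field; rewrite ?gt_eqF // mulr_gt0.
apply: ler_wpM2l => //; apply: divr_ge0; lra.
Qed.

Lemma psi2_pos a : eps < a -> Psi2 eps < Psi2 a.
Proof.
move=> ea; have e0 := he; have mg := mm_gt0; have b0 := hb0.
rewrite /Psi2 ltr_pM2l; last by apply: divr_gt0; [lra| exact: mulr_gt0].
exact: ln_lt.
Qed.

Lemma N2_bound (a : R) (n : nat) : eps <= a ->
  (n%:R : R) < Psi2 a - Psi2 eps + 1 -> (n%:R : R) <= N_bound 2 mu rho beta eps a.
Proof.
move=> ea hn; have e0 := he.
rewrite /N_bound ltxx.
apply: nat_le_ceil.
rewrite ln_div ?posrE //; last lra.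
move: hn; rewrite /Psi2 /mm.
have -> : 2 / (beta * Num.min (mu / rho) 1) * ln a - 2 / (beta * Num.min (mu / rho) 1) * ln eps
  = 2 * (ln a - ln eps) / (beta * Num.min (mu / rho) 1) by ring.
done.
Qed.

End P2.


Unset Implicit Arguments. Set Strict Implicit.

Theorem theorem4 (R : realType) (d : nat) (f : 'rV[R]_d -> R) (L fstar mu p : R)
    (g : 'rV[R]_d -> 'rV[R]_d) (beta rho eps : R)
    (x z : nat -> 'rV[R]_d) (fmod : nat -> 'rV[R]_d -> R) :
  convex_fun f ->
  smooth_with f L ->
  is_min_value f fstar ->
  0 < mu -> 2 <= p ->
  (forall y, mu * powR (dist y [set w | f w = fstar]) p <= f y - fstar) ->
  (forall y, is_subgradient f y (g y)) ->
  0 < beta < 1 -> 0 < rho ->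
  PBM_run f g beta rho x z fmod ->
  0 < eps -> eps <= f (x 0%N) - fstar ->
  exists K : nat,
    [/\ f (x K) - fstar <= eps,
        (n_descent beta f x z fmod K)%:R
          <= N_bound p mu rho beta eps (f (x 0%N) - fstar) &
        (n_null beta f x z fmod K)%:R
          <= null_bound p L mu rho beta eps (f (x 0%N) - fstar)].
Proof.
move=> hconv hsm hmin hmu hp hgrow hsub /andP [hb0 hb1] hr hrun he heD.
have hL : 0 <= L.
  apply: (Lge0 hsub (c := x 0%N) hsm); apply/eqP => h.
  have := g0_min hsub h; case: hmin => _ [w hw] /(_ w); rewrite hw; lra.
have [p2|p2] := ltrP 2 p.
- have [K [h1 h2 h3]] := @main_generic R d f L fstar g beta rho x z fmod hconv hsm hsub
    hb0 hb1 hr hL hrun hmin mu p eps (Psi mu rho beta p eps)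
    (N_bound p mu rho beta eps (f (x 0%N) - fstar)) hgrow he
    (fun a a' D h ea' D0 hg ha ht => step_gt2 hmu hr hb0 hb1 p2 he ea' D0 hg ha ht)
    (fun a ea => psi_pos mu rho hb0 hb1 p2 he ea) heD
    (fun n hn => N_gt2_bound hmu hr hb0 hb1 p2 he heD hn).
  exists K; split => //.
  rewrite /null_bound p2.
  apply: le_trans h3 _.
  apply: ler_wpM2l; first exact: CC_ge0.
  lra.
- have p2' : p = 2 by apply/eqP; rewrite eq_le p2 hp.
  subst p.
  have [K [h1 h2 h3]] := @main_generic R d f L fstar g beta rho x z fmod hconv hsm hsub
    hb0 hb1 hr hL hrun hmin mu 2 eps (Psi2 mu rho beta)
    (N_bound 2 mu rho beta eps (f (x 0%N) - fstar)) hgrow he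
    (fun a a' D h ea' D0 hg ha ht => step_2 hmu hr hb0 hb1 he ea' D0 hg ha ht)
    (fun a ea => psi2_pos hmu hr hb0 he ea) heD
    (fun n hn => N2_bound he heD hn).
  exists K; split => //.
  by rewrite /null_bound ltxx.
Qed.
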